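(* Consider on-line exploration of rings with homebase $v_0$ and invoking cost $q\ge 0$. Let $\mathcal{S}$ be the on-line strategy (procedure RingOnline) defined as follows. Invoke an agent $a_1$ at $v_0$. Let $f_1,f_{-1}$ be the two edges incident to $v_0$ with $w(f_1)\le w(f_{-1})$. Maintain an edge $R$ (initially $R=f_1$), an edge $L$ (initially $L=f_{-1}$) and a flag $s$ (initially $s=1$). Repeat until all vertices are explored: (i) while $w(L)+q\cdot s\ge w(R)$ and not all vertices are explored: $a_1$ traverses $R$, and $R$ is reset to the unexplored edge incident to the vertex now occupied by $a_1$; (ii) if $s=1$ and $w(f_{-1})+q<w(R)$: invoke a second agent $a_2$ at $v_0$, $a_2$ traverses $f_{-1}$, $L$ is reset to the unexplored edge incident to the vertex now occupied by $a_2$, and $s$ is set to $0$; (iii) if $s=0$: while $w(L)<w(R)$ and not all vertices are explored: $a_2$ traverses $L$, and $L$ is reset to the unexplored edge incident to the vertex now occupied by $a_2$. Then $\mathcal{S}$ is $2$-competitive on rings: for every edge-weighted ring $C$ with homebase $v_0$, $\mathcal{S}(C)\le 2\,\mathcal{S}^{opt}(C)$.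
   Context: Exploration model: a connected undirected graph with positive edge weights $w$ and a designated homebase vertex is given, together with an invoking cost $q\ge 0$. A strategy is a sequence of moves, each either (1) invoking a new agent, which appears at the homebase, or (2) an agent traversing an edge incident to its current vertex. A vertex is explored when first visited; a strategy explores the graph when every vertex has been visited by some agent (agents need not return to the homebase). If $k$ agents are used and agent $i$ traverses total distance $d_i$ (sum of weights of traversed edges, with multiplicity), the cost is $kq+\sum_i d_i$. A ring is a cycle graph with $n\ge 3$ vertices. In the on-line setting the graph is not known in advance: an agent at a vertex $v$ knows the weights of the edges incident to $v$ and whether each neighbour of $v$ is already explored, and agents communicate freely; the strategy's moves depend only on information revealed so far. $\mathcal{S}(C)$ denotes the cost of strategy $\mathcal{S}$ on $C$, and $\mathcal{S}^{opt}(C)$ the minimum cost of an off-line strategy (with full knowledge of $C$) exploring $C$ with the same $q$ and homebase. *)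

(* Defs.v *)
From HB Require Import structures.
From mathcomp Require Import all_boot all_order all_algebra.
Set Implicit Arguments. Unset Strict Implicit. Unset Printing Implicit Defensive.
Import Order.TTheory GRing.Theory Num.Theory.

(* Rings.  A ring with n >= 3 vertices has vertices 0, ..., n-1; edge e    *)
(* (for e < n) joins vertex e and vertex (e+1) mod n and has weight w e.   *)
(* The homebase v0 is vertex 0 (WLOG: any labelling is allowed, as w is    *)
(* arbitrary).                                                              *)

Definition succv (n v : nat) : nat := v.+1 %% n.
Definition predv (n v : nat) : nat := (v + n.-1) %% n.

Definition dest (n v : nat) (d : bool) : nat := if d then succv n v else predv n v.
Definition edge_of (n v : nat) (d : bool) : nat := if d then v else predv n v.

(* General (off-line) strategies: a sequence of moves.                     *)
(*   Traverse k d   : agent number k (0-based, in invocation order)        *)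
(*                    traverses the incident edge in direction d.          *)

Inductive move := Invoke | Traverse of nat & bool.

Record xstate := XState { pos : seq nat; visited : seq nat }.
Definition xinit : xstate := XState [::] [::].

Definition xstep (n : nat) (m : move) (st : xstate) : option xstate :=
  match m with
  | Invoke => Some (XState (rcons (pos st) 0) (0 :: visited st))
  | Traverse k d =>
      if k < size (pos st) then
        let v' := dest n (nth 0 (pos st) k) d in
        Some (XState (set_nth 0 (pos st) k v') (v' :: visited st))
      else None
  end.

Fixpoint xexec (n : nat) (ms : seq move) (st : xstate) : option xstate :=
  match ms with
  | [::] => Some st
  | m :: ms' => match xstep n m st with
                | Some st' => xexec n ms' st'
                | None => None
                end
  end.

Definition explored_all (n : nat) (st : xstate) : bool :=
  all (fun v => v \in visited st) (iota 0 n).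

Local Open Scope ring_scope.

Definition move_cost (R : numDomainType) (n : nat) (w : nat -> R) (q : R)
    (st : xstate) (m : move) : R :=
  match m with
  | Invoke => q
  | Traverse k d => w (edge_of n (nth 0%N (pos st) k) d)
  end.

Fixpoint run (R : numDomainType) (n : nat) (w : nat -> R) (q : R)
    (ms : seq move) (st : xstate) (c : R) : option (xstate * R) :=
  match ms with
  | [::] => Some (st, c)
  | m :: ms' => match xstep n m st with
                | Some st' => run n w q ms' st' (c + move_cost n w q st m)
                | None => None
                end
  end.

Definition explores_with_cost (R : numDomainType) (n : nat) (w : nat -> R) (q : R)
    (T : seq move) (c : R) : Prop :=
  exists st, run n w q T xinit 0 = Some (st, c) /\ explored_all n st.

Definition strategy_cost (R : numDomainType) (n : nat) (w : nat -> R) (q : R)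
    (T : seq move) : R :=
  match run n w q T xinit 0 with Some (_, c) => c | None => 0 end.

(* Procedure RingOnline, as a small-step program.  Agent a1 is agent 0,    *)
(* agent a2 is agent 1.  Edges R, L are stored by their index.             *)

Inductive phase :=
  | PStart
  | PTop
  | PI
  | PIReset
  | PII
  | PIIReset
  | PIII
  | PIIIReset.

Record ctrl := Ctrl { eR : nat; eL : nat; sflag : bool; ph : phase }.
Definition ctrl_init : ctrl := Ctrl 0 0 true PStart.

Definition unexp_edge (n : nat) (st : xstate) (u : nat) : nat :=
  if succv n u \notin visited st then u else predv n u.

(* f_1 and f_{-1}: the edges at 0 with w f_1 <= w f_{-1} (ties: f_1 = edge 0) *)
Definition f1 (R : numDomainType) (n : nat) (w : nat -> R) : nat :=
  if w 0%N <= w n.-1 then 0%N else n.-1.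
Definition fm1 (R : numDomainType) (n : nat) (w : nat -> R) : nat :=
  if w 0%N <= w n.-1 then n.-1 else 0%N.

(* One control step: None = halt; otherwise the moves performed during this
   step (possibly none) and the new control state. *)
Definition decide (R : numDomainType) (n : nat) (w : nat -> R) (q : R)
    (st : xstate) (cs : ctrl) : option (seq move * ctrl) :=
  let a1 := nth 0%N (pos st) 0%N in
  let a2 := nth 0%N (pos st) 1%N in
  let s := sflag cs in
  match ph cs with
  | PStart => Some ([:: Invoke], Ctrl (f1 n w) (fm1 n w) true PTop)
  | PTop => if explored_all n st then None
            else Some ([::], Ctrl (eR cs) (eL cs) s PI)
  | PI => if (w (eR cs) <= w (eL cs) + q * (s : nat)%:R) && ~~ explored_all n st
          then Some ([:: Traverse 0%N (eR cs == a1)], Ctrl (eR cs) (eL cs) s PIReset)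
          else Some ([::], Ctrl (eR cs) (eL cs) s PII)
  | PIReset => Some ([::], Ctrl (unexp_edge n st a1) (eL cs) s PI)
  | PII => if s && (w (fm1 n w) + q < w (eR cs)) && ~~ explored_all n st
           then Some ([:: Invoke; Traverse 1%N (fm1 n w == 0%N)],
                      Ctrl (eR cs) (eL cs) s PIIReset)
           else Some ([::], Ctrl (eR cs) (eL cs) s PIII)
  | PIIReset => Some ([::], Ctrl (eR cs) (unexp_edge n st a2) false PIII)
  | PIII => if ~~ s && (w (eL cs) < w (eR cs)) && ~~ explored_all n st
            then Some ([:: Traverse 1%N (eL cs == a2)], Ctrl (eR cs) (eL cs) s PIIIReset)
            else Some ([::], Ctrl (eR cs) (eL cs) s PTop)
  | PIIIReset => Some ([::], Ctrl (eR cs) (unexp_edge n st a2) s PIII)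
  end.

Inductive online_exec (R : numDomainType) (n : nat) (w : nat -> R) (q : R)
    : xstate -> ctrl -> seq move -> Prop :=
  | oe_halt st cs : decide n w q st cs = None -> online_exec n w q st cs [::]
  | oe_step st cs ms cs' st' rest :
      decide n w q st cs = Some (ms, cs') ->
      xexec n ms st = Some st' ->
      online_exec n w q st' cs' rest ->
      online_exec n w q st cs (ms ++ rest).

Definition ring_online_moves (R : numDomainType) (n : nat) (w : nat -> R) (q : R)
    (ms : seq move) : Prop :=
  online_exec n w q xinit ctrl_init ms.

(* Main.v *)
Require Import Defs.
From HB Require Import structures.
From mathcomp Require Import all_boot all_order all_algebra zify ring lra.
Set Implicit Arguments. Unset Strict Implicit. Unset Printing Implicit Defensive.
Import Order.TTheory GRing.Theory Num.Theory.

Module N1.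

Definition vdir (n : nat) (d : bool) (k : nat) : nat := if d then k %% n else (n - k) %% n.
Definition edir (n : nat) (d : bool) (k : nat) : nat := if d then k else n.-1 - k.

Lemma modsm n a : a < n -> a %% n = a. Proof. exact: modn_small. Qed.
Lemma modDsm n a : a < n -> (a + n) %% n = a.
Proof. by move=> h; rewrite modnDr modn_small. Qed.

Lemma vdir_lt n d k : 0 < n -> vdir n d k < n.
Proof. by move=> h; case: d; rewrite /vdir ltn_pmod. Qed.

Lemma vdir0 n d : vdir n d 0 = 0.
Proof. by case: d; rewrite /vdir ?mod0n ?subn0 ?modnn. Qed.

Lemma nmodE n k : 0 < n -> k < n -> (n - k) %% n = if k == 0 then 0 else n - k.
Proof.
move=> h hk; case: eqP => [->|hk0]; first by rewrite subn0 modnn.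
by rewrite modsm //; lia.
Qed.

Lemma vdir_inv n d v : v < n -> vdir n d (vdir n d v) = v.
Proof.
move=> hv; have n0 : 0 < n by lia.
case: d; rewrite /vdir; first by rewrite !modsm.
rewrite (nmodE n0 hv); case: eqP => [->|h0]; first by rewrite subn0 modnn.
rewrite nmodE //; last by lia.
have -> : (n - v == 0) = false by apply/eqP; lia.
lia.
Qed.

Lemma vdir_neg n d k : k < n -> vdir n d (vdir n (~~d) k) = (n - k) %% n.
Proof.
move=> hk; have n0 : 0 < n by lia.
case: d; rewrite /vdir /=; first by rewrite modn_mod.
by rewrite (modsm hk).
Qed.

Lemma dest_vdir n d k : k < n -> dest n (vdir n d k) d = vdir n d k.+1.
Proof.
move=> hk; have n0 : 0 < n by lia.
case: d; rewrite /dest /vdir /succv /predv; first by rewrite (modsm hk).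
rewrite (nmodE n0 hk); case: eqP => [->|h0].
  by rewrite add0n subn1 modsm //; lia.
have -> : n - k + n.-1 = (n - k.+1) + n by lia.
by rewrite modnDr.
Qed.

Lemma edge_vdir n d k : k < n -> edge_of n (vdir n d k) d = edir n d k.
Proof.
move=> hk; have n0 : 0 < n by lia.
case: d; rewrite /edge_of /vdir /edir /predv; first by rewrite (modsm hk).
rewrite (nmodE n0 hk); case: eqP => [->|h0].
  by rewrite add0n modsm //; lia.
have -> : n - k + n.-1 = (n.-1 - k) + n by lia.
by rewrite modDsm //; lia.
Qed.

Lemma dir_vdir n d k : 2 <= n -> k < n -> (edir n d k == vdir n d k) = d.
Proof.
move=> n2 hk; have n0 : 0 < n by lia.
case: d; rewrite /vdir /edir; first by rewrite (modsm hk) eqxx.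
rewrite (nmodE n0 hk); case: (posnP k) => [->|k0] /=; apply/negbTE/eqP; first lia.
lia.
Qed.

Lemma edir_neg n d k : k < n -> edir n (~~d) k = edir n d (n.-1 - k).
Proof. by move=> hk; case: d; rewrite /edir /=; lia. Qed.

Lemma edir_lt n d k : k < n -> edir n d k < n.
Proof. by case: d; rewrite /edir; lia. Qed.

Lemma edir_inv n d k : k < n -> edir n d (edir n d k) = k.
Proof. by case: d; rewrite /edir; lia. Qed.

Lemma unexp_vdir n d k st : 0 < k -> k < n ->
  vdir n d k.+1 \notin visited st -> vdir n d k.-1 \in visited st ->
  unexp_edge n st (vdir n d k) = edir n d k.
Proof.
move=> k0 hk h1 h2; have n0 : 0 < n by lia.
rewrite /unexp_edge; case: d h1 h2; rewrite /vdir /edir /succv /predv.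
  by rewrite (modsm hk) => ->.
rewrite (nmodE n0 hk) (negbTE (_ : k != 0)); last by lia.
have -> : (n - k).+1 = n - k.-1 by lia.
move=> _ ->. have -> : n - k + n.-1 = (n.-1 - k) + n by lia.
by rewrite modDsm //; lia.
Qed.

End N1.
Import N1.
Module LBm.

Lemma destE n u d : u < n -> dest n u d =
  if d then (if u.+1 == n then 0 else u.+1) else (if u == 0 then n.-1 else u.-1).
Proof.
move=> hu; case: d; rewrite /dest /succv /predv.
  case: eqP => [->|h]; first by rewrite modnn. by rewrite modsm //; lia.
case: eqP => [->|h]; first by rewrite add0n modsm //; lia.
have -> : u + n.-1 = u.-1 + n by lia. by rewrite modDsm //; lia.
Qed.

Lemma edgeE n u d : u < n -> edge_of n u d = if d then u else (if u == 0 then n.-1 else u.-1).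
Proof.
move=> hu; case: d; rewrite /edge_of /predv //.
case: eqP => [->|h]; first by rewrite add0n modsm //; lia.
have -> : u + n.-1 = u.-1 + n by lia. by rewrite modDsm //; lia.
Qed.

Lemma edge_lt n u d : u < n -> edge_of n u d < n.
Proof. move=> hu; rewrite edgeE //; case: d; repeat case: eqP; lia. Qed.

Definition goodv (n : nat) (E : seq nat) (v : nat) : Prop :=
  v < n /\ forall e1 e2, e1 < e2 -> e2 < n -> e1 \notin E -> e2 \notin E -> ~~ (e1 < v <= e2).

Lemma goodv_step n E u d : goodv n E u ->
  goodv n (edge_of n u d :: E) (dest n u d) /\ goodv n (edge_of n u d :: E) u.
Proof.
move=> [hu hg]; split; last first.
  split=> // e1 e2 h12 h2 h1' h2'; apply: hg => //.
    by move: h1'; rewrite in_cons negb_or => /andP[].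
  by move: h2'; rewrite in_cons negb_or => /andP[].
split; first by rewrite destE //; case: d; repeat case: eqP; lia.
move=> e1 e2 h12 h2; rewrite !in_cons !negb_or => /andP[n1 h1] /andP[n2 hh2].
have := hg e1 e2 h12 h2 h1 hh2.
move: n1 n2; rewrite destE // edgeE //.
case: d; repeat case: eqP; move=> *; apply/negP; move=> /andP [] *; lia.
Qed.

Section LBsec.
Local Open Scope ring_scope.
Variable (R : realFieldType) (n : nat) (w : nat -> R) (q : R).
Hypothesis n3 : (3 <= n)%N.
Hypothesis wpos : forall i, (i < n)%N -> 0 < w i.
Hypothesis q0 : 0 <= q.
Local Open Scope ring_scope.

Definition LBinv (st : xstate) (E : seq nat) (c : R) : Prop :=
  (forall v, v \in pos st ++ visited st -> goodv n E v) /\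
  (pos st = [::] -> visited st = [::]) /\
  \sum_(i < n | (i : nat) \in E) w i + (if pos st is [::] then 0 else q) <= c.

Lemma mem_set_nth' (s : seq nat) i y x : (i < size s)%N ->
  x \in set_nth 0%N s i y -> (x == y) || (x \in s).
Proof.
elim: s i => [|a s IH] [|i] //= hi; rewrite !in_cons.
  by case/orP=> ->; rewrite ?orbT.
case/orP=> [->|h]; first by rewrite orbT.
by case/orP: (IH i hi h) => ->; rewrite ?orbT.
Qed.

Lemma LBstep st E c m st' : xstep n m st = Some st' -> LBinv st E c ->
  LBinv st' (if m is Traverse k d then edge_of n (nth 0%N (pos st) k) d :: E else E)
        (c + move_cost n w q st m).
Proof.
case: m => [|k d] /=.
  case=> <- [hg [he hc]] /=; split.
    have g0 : goodv n E 0.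
      split; first lia. by move=> e1 e2 *; apply/negP => /andP[]; lia.
    move=> v; rewrite mem_cat mem_rcons !in_cons => /orP[/orP[/eqP->//|h]|/orP[/eqP->//|h]].
      by apply: hg; rewrite mem_cat h.
    by apply: hg; rewrite mem_cat h orbT.
  split; first by case: (pos st).
  case: (pos st) hc => [|a s] /= hc.
    by rewrite addr0 in hc; lra.
  by apply: (le_trans hc); rewrite lerDl.
case: ltnP => // hk [<-] [hg [he hc]] /=.
set u := nth 0%N (pos st) k.
have hu : goodv n E u by apply: hg; rewrite mem_cat mem_nth.
have [g1 g2] := goodv_step d hu.
split.
  move=> v; rewrite mem_cat in_cons => /orP[/(mem_set_nth' hk)/orP[/eqP->//|h]|/orP[/eqP->//|h]].
    have [hv hvg] : goodv n E v by apply: hg; rewrite mem_cat h.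
    split=> // e1 e2 h12 h2 h1' h2'; apply: hvg => //.
      by move: h1'; rewrite in_cons negb_or => /andP[].
    by move: h2'; rewrite in_cons negb_or => /andP[].
  have [hv hvg] : goodv n E v by apply: hg; rewrite mem_cat h orbT.
  split=> // e1 e2 h12 h2 h1' h2'; apply: hvg => //.
    by move: h1'; rewrite in_cons negb_or => /andP[].
  by move: h2'; rewrite in_cons negb_or => /andP[].
split; first by move=> /= h; have := size_set_nth 0%N (pos st) k (dest n u d); rewrite h /=; lia.
have hsz : pos st <> [::] by move=> h; rewrite h in hk.
have -> : (if set_nth 0%N (pos st) k (dest n u d) is [::] then 0 else q) = q.
  case: (set_nth 0%N (pos st) k (dest n u d)) (size_set_nth 0%N (pos st) k (dest n u d)) => //= h.
  exfalso; lia.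
have hq : (if pos st is [::] then 0 else q) = q by case: (pos st) hsz.
rewrite hq in hc.
set e := edge_of n u d.
have he0 : 0 <= w e.
  by apply/ltW/wpos; rewrite /e; apply: edge_lt; case: hu.
suff : \sum_(i < n | (i : nat) \in e :: E) w i <= \sum_(i < n | (i : nat) \in E) w i + w e by lra.
rewrite [X in _ <= X + _]big_mkcond [X in X <= _]big_mkcond /=.
case: (boolP (e < n)%N) => hen.
  rewrite [X in _ <= X + _](bigD1 (Ordinal hen)) //= [X in X <= _](bigD1 (Ordinal hen)) //=.
  rewrite in_cons eqxx /=.
  have : \sum_(i < n | i != Ordinal hen) (if (i:nat) \in e :: E then w i else 0) =
         \sum_(i < n | i != Ordinal hen) (if (i:nat) \in E then w i else 0).
    apply: eq_bigr => i hi; rewrite in_cons (_ : ((i:nat) == e) = false) //.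
    by apply/negbTE; move: hi; apply: contra => /eqP h; apply/eqP/val_inj.
  move=> ->; case: ifP => _; lra.
have : \sum_(i < n) (if (i:nat) \in e :: E then w i else 0) =
       \sum_(i < n) (if (i:nat) \in E then w i else 0).
  apply: eq_bigr => i _; rewrite in_cons (_ : ((i:nat) == e) = false) //.
  by apply/negbTE/eqP => h; move: hen; rewrite -h ltn_ord.
move=> ->; lra.
Qed.

Lemma LBrun T st E c st' c' : run n w q T st c = Some (st', c') -> LBinv st E c ->
  exists E', LBinv st' E' c'.
Proof.
elim: T st E c => [|m T IH] st E c /=; first by case=> <- <- h; exists E.
case h: (xstep n m st) => [st1|] // hr hinv.
exact: (IH _ _ _ hr (LBstep h hinv)).
Qed.

Lemma LBfinal st E c : LBinv st E c -> explored_all n st ->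
  exists e, (e < n)%N /\ q + \sum_(i < n) w i - w e <= c.
Proof.
move=> [hg [he hc]] hall.
have h0 : (0 \in visited st)%N.
  by move/allP: hall => /(_ 0%N); rewrite mem_iota; apply; lia.
have hpos : pos st <> [::] by move=> h; move: h0; rewrite (he h).
have hc' : \sum_(i < n | (i : nat) \in E) w i + q <= c by case: (pos st) hpos hc.
have hvis : forall v, (v < n)%N -> goodv n E v.
  move=> v hv; apply: hg; rewrite mem_cat; apply/orP; right.
  by move/allP: hall => /(_ v); rewrite mem_iota; apply; lia.
case: (pickP (fun i : 'I_n => (i : nat) \notin E)) => [e he'|hnone].
  exists e; split; first exact: ltn_ord.
  rewrite (bigD1 e) //=.
  suff : \sum_(i < n | i != e) w i <= \sum_(i < n | (i : nat) \in E) w i by lra.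
  rewrite [X in _ <= X]big_mkcond [X in X <= _]big_mkcond /=; apply: ler_sum => i _.
  case: eqP => [->|hie] /=; first by case: ifP => _ //; apply/ltW/wpos.
  have -> : ((i:nat) \in E) = true; last by [].
  apply/negPn/negP => hiE.
  have hne : (i : nat) <> (e : nat) by move=> h; apply: hie; apply/val_inj.
  case: (ltngtP i e) => [hlt|hgt|//].
    have [_ hh] := hvis e (ltn_ord e).
    by move: (hh i e hlt (ltn_ord e) hiE he'); rewrite hlt leqnn.
  have [_ hh] := hvis i (ltn_ord i).
  by move: (hh e i hgt (ltn_ord i) he' hiE); rewrite hgt leqnn.
have n0 : (0 < n)%N by lia.
exists 0%N; split=> //.
have : \sum_(i < n | (i : nat) \in E) w i = \sum_(i < n) w i.
  apply: eq_bigl => i; have := hnone i; rewrite /= => /negbFE ->; by [].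
have := wpos n0; lra.
Qed.

End LBsec.

End LBm.
Import LBm.
Module Onm.

Section On.
Local Open Scope ring_scope.
Variable (R : realFieldType) (n : nat) (w : nat -> R) (q : R).
Hypothesis n3 : (3 <= n)%N.
Hypothesis wpos : forall i, (i < n)%N -> 0 < w i.
Hypothesis q0 : 0 <= q.

Definition dR : bool := w 0%N <= w n.-1.
Definition r (k : nat) : R := w (edir n dR k).
Definition visP (i j v : nat) : bool :=
  (v < n)%N && ((vdir n dR v <= i)%N || (n - j <= vdir n dR v)%N).

Lemma n0 : (0 < n)%N. Proof. lia. Qed.

Lemma rpos k : (k < n)%N -> 0 < r k.
Proof. by move=> hk; apply: wpos; apply: edir_lt. Qed.

Lemma f1E : f1 n w = edir n dR 0. Proof. by rewrite /f1 /edir /dR; case: ifP => _; rewrite ?subn0. Qed.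
Lemma fm1E : fm1 n w = edir n (~~dR) 0. Proof. by rewrite /fm1 /edir /dR; case: ifP => _ /=; rewrite ?subn0. Qed.
Lemma wfm1 : w (fm1 n w) = r n.-1.
Proof. by rewrite fm1E edir_neg ?subn0 //; lia. Qed.
Lemma fm1_eq0 : (fm1 n w == 0%N) = ~~ dR.
Proof. by rewrite /fm1 /dR; case: ifP => _ //=; apply/eqP; lia. Qed.
Lemma r0_le : r 0 <= r n.-1.
Proof.
rewrite /r /dR /edir; case: ifP => h //=; rewrite subn0 subnn.
by apply/ltW; rewrite ltNge h.
Qed.

Lemma rd_a2 k : (k < n)%N -> vdir n dR (vdir n (~~dR) k) = ((n - k) %% n)%N.
Proof. exact: vdir_neg. Qed.

Lemma visP_a1 i j v : (i + j < n.-1)%N ->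
  (v == vdir n dR i.+1) || visP i j v = visP i.+1 j v.
Proof.
move=> hij; rewrite /visP.
case: eqP => [->|hv] /=.
  rewrite vdir_lt ?n0 //= vdir_inv; last lia. by rewrite leqnn.
case: (ltnP v n) => hvn //=.
have : vdir n dR v != i.+1.
  apply/eqP => h; apply: hv; rewrite -h vdir_inv //.
move: (vdir n dR v) => x; lia.
Qed.

Lemma vdir_a2 k : (k < n)%N -> vdir n (~~dR) k = vdir n dR ((n - k) %% n)%N.
Proof.
move=> hk; rewrite -(rd_a2 hk) vdir_inv //; apply: vdir_lt; exact: n0.
Qed.

Lemma visP_a2 i j v : (i + j < n.-1)%N ->
  (v == vdir n (~~dR) j.+1) || visP i j v = visP i j.+1 v.
Proof.
move=> hij; rewrite /visP.
have hj : (j.+1 < n)%N by lia.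
have hm : ((n - j.+1) %% n)%N = (n - j.+1)%N by rewrite modsm //; lia.
case: eqP => [->|hv] /=.
  rewrite vdir_lt ?n0 //= rd_a2 // hm leqnn; by rewrite orbT.
case: (ltnP v n) => hvn //=.
have : vdir n dR v != (n - j.+1)%N.
  apply/eqP => h; apply: hv; rewrite vdir_a2 // hm -h vdir_inv //.
move: (vdir n dR v) => x; lia.
Qed.

Lemma visP0 i j : visP i j 0 = true.
Proof. by rewrite /visP vdir0 n0. Qed.

Lemma expl_iff st i j : (forall v, (v \in visited st) = visP i j v) -> (i + j < n)%N ->
  explored_all n st = (n.-1 <= i + j)%N.
Proof.
move=> hv hij; rewrite /explored_all.
case: (leqP n.-1 (i + j)) => h.
  apply/allP => v; rewrite mem_iota add0n => /andP[_ hvn]; rewrite hv /visP hvn /=.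
  have := vdir_lt dR v n0; move: (vdir n dR v) => x; lia.
apply/negP => /allP /(_ (vdir n dR i.+1)).
rewrite mem_iota add0n vdir_lt ?n0 // => /(_ isT).
rewrite hv /visP vdir_inv; last lia. lia.
Qed.

Lemma unexp_a1 st i j : (forall v, (v \in visited st) = visP i j v) -> (i + j < n.-1)%N ->
  (0 < i)%N -> unexp_edge n st (vdir n dR i) = edir n dR i.
Proof.
move=> hv hij hi; apply: unexp_vdir => //; first lia.
  rewrite hv /visP vdir_inv; last lia. lia.
rewrite hv /visP vdir_inv; last lia. rewrite vdir_lt ?n0 //=; lia.
Qed.

Lemma unexp_a2 st i j : (forall v, (v \in visited st) = visP i j v) -> (i + j < n.-1)%N ->
  (0 < j)%N -> unexp_edge n st (vdir n (~~dR) j) = edir n (~~dR) j.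
Proof.
move=> hv hij hj; apply: unexp_vdir => //; first lia.
  rewrite hv /visP rd_a2; last lia. rewrite modsm; last lia. lia.
rewrite hv /visP rd_a2; last lia. rewrite vdir_lt ?n0 //=.
case: (j =P 1%N) => [->|hj1]; first by rewrite subn0 modnn.
rewrite modsm; last lia. lia.
Qed.


Lemma a1move s i j st c : pos st = (if s then [:: vdir n dR i] else [:: vdir n dR i; vdir n (~~dR) j]) ->
  (i < n)%N ->
  run n w q [:: Traverse 0 dR] st c =
  Some (XState (if s then [:: vdir n dR i.+1] else [:: vdir n dR i.+1; vdir n (~~dR) j])
               (vdir n dR i.+1 :: visited st), c + r i).
Proof.
case: st => p vis /= -> hi; case: s => /=; by rewrite dest_vdir // edge_vdir.
Qed.

Lemma a2move i j st c : pos st = [:: vdir n dR i; vdir n (~~dR) j] -> (j < n)%N ->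
  run n w q [:: Traverse 1 (~~dR)] st c =
  Some (XState [:: vdir n dR i; vdir n (~~dR) j.+1]
               (vdir n (~~dR) j.+1 :: visited st), c + r (n.-1 - j)).
Proof.
case: st => p vis /= -> hj /=; by rewrite dest_vdir // edge_vdir // edir_neg.
Qed.

Lemma invoke2 i st c : pos st = [:: vdir n dR i] ->
  run n w q [:: Invoke; Traverse 1 (fm1 n w == 0%N)] st c =
  Some (XState [:: vdir n dR i; vdir n (~~dR) 1]
               (vdir n (~~dR) 1 :: 0%N :: visited st), c + q + r n.-1).
Proof.
case: st => p vis /= -> /=; rewrite fm1_eq0.
rewrite -(vdir0 n (~~dR)) dest_vdir ?n0 // edge_vdir ?n0 // vdir0 edir_neg ?n0 //.
by rewrite subn0.
Qed.

Definition W := \sum_(0 <= k < n) r k.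

Lemma sumR_S i : \sum_(0 <= k < i.+1) r k = \sum_(0 <= k < i) r k + r i.
Proof. by rewrite big_nat_recr. Qed.

Lemma sumL_S j : (j < n)%N ->
  \sum_(n - j.+1 <= k < n) r k = r (n.-1 - j) + \sum_(n - j <= k < n) r k.
Proof.
move=> hj; rewrite big_ltn; last lia.
have -> : (n - j.+1).+1 = (n - j)%N by lia.
by have -> : (n - j.+1)%N = (n.-1 - j)%N by lia.
Qed.

Lemma sum_split i j : (i + j = n.-1)%N ->
  \sum_(0 <= k < i) r k + \sum_(n - j <= k < n) r k = W - r i.
Proof.
move=> hij; rewrite /W [in RHS](big_cat_nat _ (n := i)) //=; last lia.
rewrite [in RHS](big_ltn (m := i)); last lia.
have -> : i.+1 = (n - j)%N by lia.
by rewrite addrA addrAC addrK.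
Qed.

Lemma W_eq : W = \sum_(k < n) w k.
Proof.
rewrite /W /r -(big_mkord xpredT w); case: dR => //=.
rewrite big_nat_rev /=; apply: eq_big_nat => k hk; congr w; rewrite /edir; lia.
Qed.

Lemma pairW a b : (a < n)%N -> (b < n)%N -> a != b -> r a + r b <= W.
Proof.
move=> ha hb hab; rewrite /W big_mkord (bigD1 (Ordinal ha)) //=.
rewrite (bigD1 (Ordinal hb)) /=; last by rewrite -(inj_eq val_inj) /= eq_sym.
rewrite addrA lerDl; apply: sumr_ge0 => k _; apply/ltW/rpos; exact: ltn_ord.
Qed.

Lemma oneW a : (a < n)%N -> r a <= W.
Proof.
move=> ha; rewrite /W big_mkord (bigD1 (Ordinal ha)) //=.
rewrite lerDl; apply: sumr_ge0 => k _; apply/ltW/rpos; exact: ltn_ord.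
Qed.


Definition hist (s : bool) (i j i0 : nat) : Prop :=
  if s then forall k, (k < i)%N -> r k <= r n.-1 + q
  else [/\ (0 < i0 <= i)%N /\ (0 < j)%N, r n.-1 + q < r i0,
        (forall k, (k < i0)%N -> r k <= r n.-1 + q),
        (forall k, (i0 <= k < i)%N -> (r k <= r i) || (r k <= r (n.-1 - j))) &
        (forall k, (0 < k < j)%N -> (r (n.-1 - k) <= r i) || (r (n.-1 - k) <= r (n.-1 - j)))].

Definition ctrlOK (st : xstate) (cs : ctrl) (s : bool) (i j : nat) : Prop :=
  let X := ~~ explored_all n st in
  match ph cs with
  | PStart => False
  | PTop | PI | PII | PIII => [/\ sflag cs = s, (X -> eR cs = edir n dR i),
        (s -> eL cs = fm1 n w) & (~~ s -> X -> eL cs = edir n (~~dR) j)]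
  | PIReset => [/\ sflag cs = s, (0 < i)%N, (s -> eL cs = fm1 n w) &
        (~~ s -> X -> eL cs = edir n (~~dR) j)]
  | PIIReset => [/\ sflag cs = true, s = false, j = 1%N & (X -> eR cs = edir n dR i)]
  | PIIIReset => [/\ sflag cs = s, s = false, (0 < j)%N & (X -> eR cs = edir n dR i)]
  end.

Definition qs (s : bool) : R := if s then q else 2 * q.

Definition Inv (st : xstate) (cs : ctrl) (c : R) (s : bool) (i j i0 : nat) : Prop :=
  [/\ (i + j < n)%N /\ (s -> j = 0%N),
      pos st = (if s then [:: vdir n dR i] else [:: vdir n dR i; vdir n (~~dR) j]),
      (forall v, (v \in visited st) = visP i j v),
      c = qs s + \sum_(0 <= k < i) r k + \sum_(n - j <= k < n) r k &
      hist s i j i0 /\ ctrlOK st cs s i j].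

Definition Final (c : R) : Prop := forall m, (m < n)%N -> c <= 2 * (q + W - r m).

Lemma halt_ok st cs c (s : bool) i j i0 : Inv st cs c s i j i0 -> decide n w q st cs = None -> Final c.
Proof.
have hq0 := q0.
case: cs => eR0 eL0 sf ph0; rewrite /Inv => -[[hij hsj] hpos hvis hc [hh hctl]].
case: ph0 hctl => hctl; rewrite /decide /=; try by repeat case: ifP. case: ifP => // hexp _.
have {}hij : (i + j = n.-1)%N by move: hexp; rewrite (expl_iff hvis) //; lia.
move=> m hm.
have hn1 : (n.-1 < n)%N by lia.
case: s hsj hpos hc hh {hctl} => hsj hpos hc hh.
  have j0 := hsj erefl; subst j.
  have hi : i = n.-1 by lia. subst i.
  rewrite hc /qs subn0 (big_geq (m := n)) // addr0.
  have hW : W = \sum_(0 <= k < n.-1) r k + r n.-1.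
    by rewrite /W -sumR_S prednK // n0.
  have hpos1 := rpos hn1.
  case: (m =P n.-1) => [->|hmn].
    have := oneW hn1; lra.
  have hm' : (m < n.-1)%N by lia.
  have h1 := hh m hm'.
  have h2 := pairW hm hn1 (introN eqP hmn).
  lra.
case: hh => [[hi0 hj] hi0big hph1 hgR hgL].
rewrite hc /qs -addrA sum_split //.
have hL : (n.-1 - j)%N = i by lia.
rewrite hL in hgR hgL.
suff : 2 * r m <= W + r i by lra.
have hin : (i < n)%N by lia.
have hi0n : (i0 < n)%N by lia.
have hri := rpos hin.
case: (ltngtP m i) => [hmi|hmi|->]; last first.
  have := oneW hin; lra.
  case: (m =P n.-1) => [->|hmn].
    have hne : n.-1 != i0 by apply/eqP; lia.
    have h2 := pairW hn1 hi0n hne.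
    lra.
  have hk : (0 < n.-1 - m < j)%N by lia.
  have := hgL (n.-1 - m)%N; rewrite (_ : (n.-1 - (n.-1 - m))%N = m); last lia.
  rewrite orbb => /(_ hk) hr.
  have := oneW hm; lra.
case: (ltnP m i0) => hmi0.
  have hr := hph1 m hmi0.
  have hne : m != i0 by apply/eqP; lia.
  have h2 := pairW hm hi0n hne.
  lra.
have := hgR m; rewrite hmi0 hmi orbb => /(_ isT) hr.
have := oneW hm; lra.
Qed.


Definition PIc st cs := (w (eR cs) <= w (eL cs) + q * (sflag cs : nat)%:R) && ~~ explored_all n st.
Definition PIIc st cs := sflag cs && (w (fm1 n w) + q < w (eR cs)) && ~~ explored_all n st.

Definition rho st cs : nat :=
  match ph cs with
  | PStart => 0%N
  | PTop => if explored_all n st then 0%N else if sflag cs || (w (eR cs) <= w (eL cs)) then 3%N else 9%N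
  | PI => if PIc st cs || PIIc st cs then 2%N else 6%N
  | PII => if PIIc st cs then 1%N else 5%N
  | PIII => 4%N
  | _ => 9%N
  end.

Definition mu st cs (i j : nat) : nat := (10 * (n - (i + j)) + rho st cs)%N.

Lemma inv_same st cs cs' c s i j i0 : Inv st cs c s i j i0 -> ctrlOK st cs' s i j ->
  Inv st cs' c s i j i0.
Proof. by case=> h1 h2 h3 h4 [h5 h6] h7; split. Qed.

Lemma nth_a1 st (s : bool) i j :
  pos st = (if s then [:: vdir n dR i] else [:: vdir n dR i; vdir n (~~dR) j]) ->
  nth 0%N (pos st) 0 = vdir n dR i.
Proof. by move=> ->; case: s. Qed.

Lemma wL j : (j < n)%N -> w (edir n (~~dR) j) = r (n.-1 - j).
Proof. by move=> hj; rewrite edir_neg. Qed.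

Lemma step_ok st cs c s i j i0 ms cs' : Inv st cs c s i j i0 ->
  decide n w q st cs = Some (ms, cs') ->
  exists st' c' s' i' j' i0', run n w q ms st c = Some (st', c') /\
    Inv st' cs' c' s' i' j' i0' /\ (mu st' cs' i' j' < mu st cs i j)%N.
Proof.
have hq0 := q0.
move=> hinv; have := hinv.
case: cs hinv => eR0 eL0 sf ph0 hinv; rewrite /Inv => -[[hij hsj] hpos hvis hc [hh hctl]].
have hX := expl_iff hvis hij.
case: ph0 hinv hctl => hinv hctl; rewrite /decide /= in hctl *.
- by [].
-
  case: ifP => // hexp [<- <-].
  exists st, c, s, i, j, i0; split=> //; split; first exact: inv_same hinv hctl.
  rewrite /mu /rho /= hexp.
  case: hctl => /= hsf hR hL1 hL2; subst sf.
  rewrite /PIc /PIIc /= hexp /=.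
  case: s hL1 hL2 {hsj hpos hc hh hinv} => hL1 hL2.
    rewrite (hL1 erefl) mulr1 !andbT /=.
    case: leP => h /=; try lia.
  rewrite /= mulr0n mulr0 addr0 !andbT /=.
  by rewrite orbF; case: ifP => h /=; lia.
-
  case: ifP => hcond [<- <-].
    have hnx : ~~ explored_all n st by case/andP: hcond.
    have hij' : (i + j < n.-1)%N by move: hnx; rewrite hX; lia.
    case: hctl => /= hsf hR hL1 hL2; subst sf.
    have hR' := hR hnx.
    have hdir : (eR0 == nth 0%N (pos st) 0) = dR.
      by rewrite (nth_a1 hpos) hR' dir_vdir //; lia.
    rewrite hdir.
    exists (XState (if s then [:: vdir n dR i.+1] else [:: vdir n dR i.+1; vdir n (~~dR) j])
             (vdir n dR i.+1 :: visited st)), (c + r i), s, i.+1, j, i0.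
    have hin : (i < n)%N by lia.
    split; first exact: (@a1move s i j st c hpos hin).
    split; last by rewrite /mu /rho /= /PIc /= hcond /=; lia.
    case/andP: hcond => hc1 _.
    split.
    + by split; [lia | exact: hsj].
    + by [].
    + by move=> v /=; rewrite in_cons hvis; exact: visP_a1.
    + by rewrite hc sumR_S; lra.
    split; last by split=> //; move=> hs _; exact: hL2 hs hnx.
    case: s hL1 hL2 hh hc1 {hsj hpos hc hinv} => hL1 hL2 hh hc1.
      rewrite (hL1 erefl) wfm1 hR' mulr1 in hc1.
      move=> k; rewrite ltnS leq_eqVlt => /orP[/eqP->//|hk]; exact: hh.
    rewrite (hL2 erefl hnx) wL ?hR' /= ?mulr0n ?mulr0 ?addr0 in hc1; last lia.
    case: hh => [[hi0 hj] hbig hph1 hgR hgL].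
    split=> //.
    + split=> //; lia.
    + move=> k /andP[hk1]; rewrite ltnS leq_eqVlt => /orP[/eqP->|hk2].
        by rewrite hc1 orbT.
      have := hgR k; rewrite hk1 hk2 => /(_ isT) /orP[h|h]; apply/orP; right => //.
      exact: le_trans h hc1.
    + move=> k hk; case/orP: (hgL k hk) => h; apply/orP; right => //.
      exact: le_trans h hc1.
  exists st, c, s, i, j, i0; split=> //; split; first exact: inv_same hinv hctl.
  by rewrite /mu /rho /= /PIc /PIIc /= hcond /=; case: ifP; lia.
-
  case=> <- <-; case: hctl => /= hsf hi hL1 hL2.
  exists st, c, s, i, j, i0; split=> //; split.
    apply: inv_same hinv _; rewrite /ctrlOK /=; split=> // hnx.
    rewrite (nth_a1 hpos); apply: unexp_a1 => //; move: hnx; rewrite hX; lia.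
  by rewrite /mu /rho /=; case: ifP; lia.
-
  case: ifP => hcond [<- <-]; last first.
    exists st, c, s, i, j, i0; split=> //; split; first exact: inv_same hinv hctl.
    by rewrite /mu /rho /PIIc /= hcond /=; lia.
  have hmu : rho st (Ctrl eR0 eL0 sf PII) = 1%N by rewrite /rho /PIIc /= hcond.
  case/andP: hcond => /andP[hsf' hc2] hnx.
  case: hctl => /= hsf hR hL1 hL2; subst sf.
  case: s hsf' hsj hpos hc hh hL1 hL2 hinv hmu => // _ hsj hpos hc hh hL1 hL2 hinv hmu.
  have j0 := hsj erefl; subst j.
  have hij' : (i + 0 < n.-1)%N by move: hnx; rewrite hX; lia.
  have hR' := hR hnx.
  rewrite wfm1 hR' in hc2.
  have hi0 : (0 < i)%N.
    case: (posnP i) => // hi; rewrite hi in hc2.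
    have h1 := r0_le; have h2 : r 0 = w (edir n dR 0) by []. exfalso; lra.
  exists (XState [:: vdir n dR i; vdir n (~~dR) 1] (vdir n (~~dR) 1 :: 0%N :: visited st)),
    (c + q + r n.-1), false, i, 1%N, i.
  split; first exact: (@invoke2 i st c hpos).
  split; last by rewrite /mu hmu /rho /=; lia.
  split.
  + by split=> //; lia.
  + by [].
  + move=> v /=; rewrite !in_cons hvis -(visP_a2 _ hij').
    by case: (v =P 0%N) => [->|_] /=; rewrite ?visP0 ?orbT.
  + rewrite hc (sumL_S (j := 0)) ?subn0 /qs; [lra | lia].
  split; last by split=> // hnx'.
  split=> //.
  + split=> //; lia.
  + by move=> k; lia.
  + by move=> k; lia.
-
  case=> <- <-; case: hctl => /= hsf hs hj1 hR; subst s j.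
  exists st, c, false, i, 1%N, i0; split=> //; split.
    apply: inv_same hinv _; rewrite /ctrlOK /=; split=> // _ hnx.
    rewrite hpos /=; apply: unexp_a2 => //; move: hnx; rewrite hX; lia.
  by rewrite /mu /rho /=; lia.
-
  case: ifP => hcond [<- <-]; last first.
    exists st, c, s, i, j, i0; split=> //; split; first exact: inv_same hinv hctl.
    rewrite /mu /rho /=; case: ifP => hx; first lia.
    move: hcond; rewrite hx andbT; case: sf {hctl hinv} => /= h; first lia.
    by rewrite leNgt h /=; lia.
  case/andP: hcond => /andP[hsf' hc2] hnx.
  case: hctl => /= hsf hR hL1 hL2; subst sf.
  case: s hsf' hsj hpos hc hh hL1 hL2 hinv => // _ hsj hpos hc hh hL1 hL2 hinv.
  have hij' : (i + j < n.-1)%N by move: hnx; rewrite hX; lia.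
  have hR' := hR hnx.
  have hL' := hL2 isT hnx.
  have hjn : (j < n)%N by lia.
  rewrite hR' hL' wL // in hc2.
  have hdir : (eL0 == nth 0%N (pos st) 1) = ~~dR.
    by rewrite hpos /= hL' dir_vdir //; lia.
  rewrite hdir.
  exists (XState [:: vdir n dR i; vdir n (~~dR) j.+1] (vdir n (~~dR) j.+1 :: visited st)),
    (c + r (n.-1 - j)), false, i, j.+1, i0.
  split; first exact: (@a2move i j st c hpos hjn).
  split; last by rewrite /mu /rho /=; lia.
  split.
  + by split=> //; lia.
  + by [].
  + by move=> v /=; rewrite in_cons hvis; exact: visP_a2.
  + by rewrite hc (sumL_S hjn); lra.
  split; last by split=> //.
  case: hh => [[hi0 hj] hbig hph1 hgR hgL].
  split; [by split; lia | exact: hbig | exact: hph1 | |].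
  + move=> k hk; case/orP: (hgR k hk) => h; apply/orP; left => //.
    exact/ltW/(le_lt_trans h hc2).
  + move=> k /andP[hk1]; rewrite ltnS leq_eqVlt => /orP[/eqP->|hk2].
      by rewrite (ltW hc2).
    have := hgL k; rewrite hk1 hk2 => /(_ isT) /orP[h|h]; apply/orP; left => //.
    exact/ltW/(le_lt_trans h hc2).
-
  case=> <- <-; case: hctl => /= hsf hs hj hR; subst sf; subst s.
  exists st, c, false, i, j, i0; split=> //; split.
    apply: inv_same hinv _; rewrite /ctrlOK /=; split=> // _ hnx.
    rewrite hpos /=; apply: unexp_a2 => //; move: hnx; rewrite hX; lia.
  by rewrite /mu /rho /=; lia.
Qed.

Lemma run_cat a b st c :
  run n w q (a ++ b) st c =
  match run n w q a st c with Some (st', c') => run n w q b st' c' | None => None end.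
Proof.
elim: a st c => [|m a IH] st c //=.
by case: (xstep n m st) => // st1; rewrite IH.
Qed.

Lemma run_xexec ms st c st' c' : run n w q ms st c = Some (st', c') -> xexec n ms st = Some st'.
Proof.
elim: ms st c => [|m ms IH] st c /=; first by case=> ->.
by case: (xstep n m st) => // st1; apply: IH.
Qed.

Lemma main_ex N : forall st cs c s i j i0, (mu st cs i j < N)%N -> Inv st cs c s i j i0 ->
  exists ms stf cf, online_exec n w q st cs ms /\ run n w q ms st c = Some (stf, cf) /\ Final cf.
Proof.
elim: N => // N IH st cs c s i j i0 hmu hinv.
case hd: (decide n w q st cs) => [[ms1 cs1]|]; last first.
  exists [::], st, c; split; first exact: oe_halt.
  by split=> //; exact: halt_ok hinv hd.
have [st' [c' [s' [i' [j' [i0' [hr [hinv' hmu']]]]]]]] := step_ok hinv hd.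
have hlt : (mu st' cs1 i' j' < N)%N by lia.
have [ms2 [stf [cf [he [hr2 hf]]]]] := IH _ _ _ _ _ _ _ hlt hinv'.
exists (ms1 ++ ms2), stf, cf; split.
  exact: oe_step hd (run_xexec hr) he.
by rewrite run_cat hr.
Qed.

Definition st1 := XState [:: 0%N] [:: 0%N].

Lemma init_inv : Inv st1 (Ctrl (f1 n w) (fm1 n w) true PTop) (0 + q) true 0 0 0.
Proof.
split=> //.
- split=> //; lia.
- by rewrite /= vdir0.
- move=> v; rewrite /= in_cons in_nil orbF.
  case: (v =P 0%N) => [->|hv]; first by rewrite visP0.
  rewrite /visP; case: (ltnP v n) => //= hvn.
  have := vdir_lt dR v n0.
  have : vdir n dR v != 0%N.
    apply/eqP => h; apply: hv; rewrite -(vdir_inv dR hvn) h vdir0 //.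
  move: (vdir n dR v) => x; lia.
- rewrite /qs subn0 big_geq // big_geq //; lra.
- split; first by move=> k.
  by split=> // _; rewrite f1E.
Qed.

Lemma online_det st cs ms1 : online_exec n w q st cs ms1 ->
  forall ms2, online_exec n w q st cs ms2 -> ms1 = ms2.
Proof.
elim=> [st0 cs0 hd|st0 cs0 ms cs1 st2 rest hd hx he IH] ms2 h2.
  inversion h2 as [? ? hd'|? ? ms' cs1' st2' rest' hd' hx' he']; subst => //.
  by rewrite hd in hd'.
inversion h2 as [? ? hd'|? ? ms' cs1' st2' rest' hd' hx' he']; subst.
  by rewrite hd in hd'.
rewrite hd in hd'; case: hd' => ? ?; subst ms' cs1'.
rewrite hx in hx'; case: hx' => ?; subst st2'.
by rewrite (IH _ he').
Qed.

End On.

Local Open Scope ring_scope.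
Lemma lemma1_proof (R : realFieldType) (n : nat) (w : nat -> R) (q : R) :
  (3 <= n)%N -> (forall i, (i < n)%N -> 0 < w i) -> 0 <= q ->
  (exists ms, ring_online_moves n w q ms) /\
  (forall ms, ring_online_moves n w q ms ->
     forall (T : seq move) (c : R), explores_with_cost n w q T c ->
       strategy_cost n w q ms <= 2 * c).
Proof.
move=> n3 wpos q0.
have hinv := init_inv w n3 q0.
have hd : decide n w q xinit ctrl_init = Some ([:: Invoke], Ctrl (f1 n w) (fm1 n w) true PTop) by [].
have hlt : (mu n w q st1 (Ctrl (f1 n w) (fm1 n w) true PTop) 0 0 <
            (mu n w q st1 (Ctrl (f1 n w) (fm1 n w) true PTop) 0 0).+1)%N by [].
have [ms2 [stf [cf [he [hr hf]]]]] := main_ex n3 wpos q0 hlt hinv.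
have hex : ring_online_moves n w q ([:: Invoke] ++ ms2).
  by apply: oe_step hd _ he.
split; first by exists ([:: Invoke] ++ ms2).
move=> ms hms T c [st [hT hall]].
rewrite (online_det hms hex) /strategy_cost run_cat /= hr.
have hlb0 : LBinv n w q xinit [::] 0.
  split=> //; split=> //=; rewrite big_pred0 ?addr0 //.
have [E hE] := LBrun n3 wpos q0 hT hlb0.
have [e [hen hle]] := LBfinal n3 wpos q0 hE hall.
have hq0 := q0.
have hm : (edir n (dR n w) e < n)%N by apply: edir_lt.
have := hf _ hm.
rewrite /r edir_inv // (W_eq w n3 q0); lra.
Qed.

End Onm.
Import Onm.

Local Open Scope ring_scope.

Theorem lemma1 (R : realFieldType) (n : nat) (w : nat -> R) (q : R) :
  (3 <= n)%N -> (forall i, (i < n)%N -> 0 < w i) -> 0 <= q ->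
  (exists ms, ring_online_moves n w q ms) /\
  (forall ms, ring_online_moves n w q ms ->
     forall (T : seq move) (c : R), explores_with_cost n w q T c ->
       strategy_cost n w q ms <= 2 * c).
Proof. exact: lemma1_proof. Qed.
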